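(* Let $\mathbb{F}$ be an arbitrary field. Let $P(t,y)\in\mathbb{F}[[t,y]]$ and $\varphi(t)\in\mathbb{F}[[t]]$ satisfy $\varphi(0)=0$, $P(t,\varphi(t))=0$ and $\partial_y P(0,0)=\alpha\neq 0$. Then $$\varphi(t) = \sum_{m\ge 1}\frac{1}{\alpha^{m+1}}\,[y^{m-1}]\Big(\partial_yP(t,y)\cdot(\alpha y - P(t,y))^m\Big).$$ If moreover $\mathbb{F}$ has characteristic zero, then also $$\varphi(t) = \sum_{m\ge 1}\frac{1}{m\,\alpha^{m}}\,[y^{m-1}]\Big((\alpha y - P(t,y))^m\Big).$$ (Both sums converge in the $t$-adic topology of $\mathbb{F}[[t]]$.)
   Context: For a power series $G(t,y)\in\mathbb{F}[[t,y]]$, $[y^a](G)\in\mathbb{F}[[t]]$ denotes the coefficient of $y^a$ when $G$ is viewed as a power series in $y$ with coefficients in $\mathbb{F}[[t]]$. *)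

(* Defs.v *)
From mathcomp Require Import all_boot all_algebra.
Set Implicit Arguments. Unset Strict Implicit. Unset Printing Implicit Defensive.
Import GRing.Theory.
Local Open Scope ring_scope.

Definition ps (F : fieldType) := nat -> F.
(* Formal power series in t,y: P i j = coefficient of t^i y^j. *)
Definition ps2 (F : fieldType) := nat -> nat -> F.

Section PS.
Variable F : fieldType.

Definition ps_one : ps F := fun n => if n == 0%N then 1 else 0.
Definition ps_mul (f g : ps F) : ps F :=
  fun n => \sum_(k < n.+1) f k * g (n - k)%N.
Fixpoint ps_pow (f : ps F) (m : nat) : ps F :=
  if m is m'.+1 then ps_mul f (ps_pow f m') else ps_one.
Definition ps_scale (c : F) (f : ps F) : ps F := fun n => c * f n.

Definition ps2_one : ps2 F := fun i j => if (i == 0%N) && (j == 0%N) then 1 else 0.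
Definition ps2_mul (P Q : ps2 F) : ps2 F :=
  fun i j => \sum_(a < i.+1) \sum_(b < j.+1) P a b * Q (i - a)%N (j - b)%N.
Fixpoint ps2_pow (P : ps2 F) (m : nat) : ps2 F :=
  if m is m'.+1 then ps2_mul P (ps2_pow P m') else ps2_one.
Definition ps2_sub (P Q : ps2 F) : ps2 F := fun i j => P i j - Q i j.
Definition ps2_cy (c : F) : ps2 F :=
  fun i j => if (i == 0%N) && (j == 1%N) then c else 0.
Definition ps2_dy (P : ps2 F) : ps2 F := fun i j => P i j.+1 *+ j.+1.
Definition ps2_coefy (a : nat) (P : ps2 F) : ps F := fun i => P i a.

(* P(t, phi(t)) = sum_j ([y^j]P)(t) * phi(t)^j; when phi(0) = 0 only j <= n
   contribute to the coefficient of t^n, so the sum is truncated. *)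
Definition ps2_subst (P : ps2 F) (phi : ps F) : ps F :=
  fun n => \sum_(j < n.+1) ps_mul (ps2_coefy j P) (ps_pow phi j) n.

(* t-adic convergence of sum_{m >= 1} f m to s: for every n, the partial
   sums eventually agree with s modulo t^(n+1). *)
Definition tadic_sum_from1 (f : nat -> ps F) (s : ps F) : Prop :=
  forall n, exists M, forall N, (M <= N)%N ->
    forall k, (k <= n)%N -> \sum_(1 <= m < N.+1) f m k = s k.

End PS.

(* Main.v *)
Require Import Defs.
From mathcomp Require Import all_boot all_algebra.
From mathcomp Require Import zify ring.
Set Implicit Arguments. Unset Strict Implicit. Unset Printing Implicit Defensive.
Import GRing.Theory.
Local Open Scope ring_scope.

Section Core.
Variable F : fieldType.
Variable n : nat.

Definition small (a : {poly F}) := forall i, (i <= n)%N -> a`_i = 0.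

Lemma small0 : small 0.
Proof. by move=> i _; rewrite coef0. Qed.

Lemma smallD a b : small a -> small b -> small (a + b).
Proof. by move=> ha hb i hi; rewrite coefD ha // hb // addr0. Qed.

Lemma smallN a : small a -> small (- a).
Proof. by move=> ha i hi; rewrite coefN ha // oppr0. Qed.

Lemma smallB a b : small a -> small b -> small (a - b).
Proof. by move=> ha hb; apply: smallD => //; apply: smallN. Qed.

Lemma smallMl a b : small a -> small (b * a).
Proof.
move=> ha i hi; rewrite coefM big1 // => j _.
by rewrite ha ?mulr0 //; apply: leq_trans (leq_subr _ _) hi.
Qed.

Lemma smallMr a b : small a -> small (a * b).
Proof. by move=> ha; rewrite mulrC; apply: smallMl. Qed.

Lemma small_sum I (r : seq I) (P : pred I) (G : I -> {poly F}) :
  (forall i, P i -> small (G i)) -> small (\sum_(i <- r | P i) G i).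
Proof.
move=> h; elim/big_rec: _ => [|i x Pi hx]; first exact: small0.
by apply: smallD => //; apply: h.
Qed.

Definition ordge (a : {poly F}) k := forall i, (i < k)%N -> a`_i = 0.

Lemma ordgeM a b k1 k2 : ordge a k1 -> ordge b k2 -> ordge (a * b) (k1 + k2).
Proof.
move=> ha hb i hi; rewrite coefM big1 // => [[j hj]] _ /=.
case: (ltnP j k1) => h1; first by rewrite ha ?mul0r.
by rewrite hb ?mulr0 //; lia.
Qed.

Lemma ordge_exp a k m : ordge a k -> ordge (a ^+ m) (k * m).
Proof.
move=> ha; elim: m => [|m ih]; first by move=> i; rewrite muln0.
by rewrite exprS mulnS; apply: ordgeM.
Qed.

Lemma small_ord a : ordge a n.+1 -> small a.
Proof. by move=> h i hi; apply: h. Qed.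

Definition W (r : {poly {poly F}}) w := forall i j, (2 * i + j < w)%N -> r`_j`_i = 0.

Lemma WM r s w1 w2 : W r w1 -> W s w2 -> W (r * s) (w1 + w2).
Proof.
move=> hr hs i j hij; rewrite coefM coef_sum big1 // => [[b hb]] _ /=.
rewrite coefM big1 // => [[a ha]] _ /=.
case: (ltnP (2 * a + b) w1) => h1; first by rewrite hr ?mul0r.
by rewrite hs ?mulr0 //; lia.
Qed.

Lemma W1 : W 1 0.
Proof. by []. Qed.

Lemma Wexp r w m : W r w -> W (r ^+ m) (w * m).
Proof.
move=> hr; elim: m => [|m ih]; first by move=> i j; rewrite muln0.
by rewrite exprS mulnS; apply: WM.
Qed.


Lemma small_cancel (v x : {poly F}) : v`_0 != 0 -> small (v * x) -> small x.
Proof.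
move=> hv hvx.
suff H : forall m i, (i <= m)%N -> (i <= n)%N -> x`_i = 0.
  by move=> i hi; apply: (H i).
elim=> [|m ih] i him hin.
  have h0 := hvx i hin; move: h0; rewrite coefM.
  have -> : i = 0%N by lia.
  rewrite big_ord_recl big_ord0 addr0 subn0 => /eqP; rewrite mulf_eq0.
  by rewrite (negbTE hv) /= => /eqP.
have h0 := hvx i hin; move: h0; rewrite coefM big_ord_recl subn0.
rewrite big1 ?addr0.
  by move=> /eqP; rewrite mulf_eq0 (negbTE hv) /= => /eqP.
move=> [j hj] _; rewrite lift0 /= ih ?mulr0 //; lia.
Qed.

Lemma inv_lemma (V X : {poly {poly F}}) L : V`_0`_0 != 0 ->
  (forall j, (j <= L)%N -> small ((V * X)`_j)) -> forall j, (j <= L)%N -> small (X`_j).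
Proof.
move=> hv h.
suff H : forall m j, (j <= m)%N -> (j <= L)%N -> small (X`_j).
  by move=> j hj; apply: (H j).
elim=> [|m ih] j hjm hjL.
  have h0 := h j hjL; move: h0; rewrite coefM.
  have -> : j = 0%N by lia.
  rewrite big_ord_recl big_ord0 addr0 subn0 => h0.
  exact: small_cancel hv h0.
have h0 := h j hjL; move: h0; rewrite coefM big_ord_recl subn0 => h0.
apply: (small_cancel hv).
have -> : V`_0 * X`_j = (V`_0 * X`_j + \sum_(i < j) V`_(lift ord0 i) * X`_(j - lift ord0 i))
   - \sum_(i < j) V`_(lift ord0 i) * X`_(j - lift ord0 i) by rewrite addrK.
apply: smallB => //; apply: small_sum => -[i hi] _; apply: smallMl.
rewrite lift0 /=; apply: ih; lia.
Qed.

Lemma recur (T : {poly {poly F}}) (f : {poly F}) :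
  forall K j, T`_j = \sum_(k < K) f ^+ k * ((('X - f%:P) * T)`_(j.+1 + k))
                     + f ^+ K * T`_(j + K).
Proof.
have hc : forall j, (('X - f%:P) * T)`_j.+1 = T`_j - f * T`_j.+1.
  by move=> j; rewrite mulrBl coefB coefXM coefCM.
elim=> [|K ih] j; first by rewrite big_ord0 add0r expr0 mul1r addn0.
rewrite ih big_ord_recr -addrA; congr (_ + _).
rewrite addSn hc addnS exprS; ring.
Qed.


Lemma Wq (p : {poly {poly F}}) (al : F) : p`_0`_0 = 0 -> p`_1`_0 = al ->
  W ((al%:P)%:P * 'X - p) 2.
Proof.
move=> h0 h1 i j hij; have -> : i = 0%N by lia.
case: j hij => [|[|j]] hij; last lia.
  by rewrite coefB coefCM coefX mulr0 coefB coef0 h0 subrr.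
by rewrite coefB coefCM coefX mulr1 coefB coefC h1 subrr.
Qed.
Lemma key (p : {poly {poly F}}) (f : {poly F}) (al : F) N :
  f`_0 = 0 -> small (p.[f]) -> p`_0`_0 = 0 -> p`_1`_0 = al -> al != 0 ->
  (3 * n + 2 <= N)%N ->
  let q := (al%:P)%:P * 'X - p in
  let a := (al%:P)%:P * 'X in
  let S := \sum_(m < N.+1) a ^+ (N - m) * q ^+ m in
  forall k, (k <= n)%N -> ((p^`() * S)`_N.-1)`_k = al ^+ N.+1 * f`_k.
Proof.
move=> hf0 hc hp0 hp1 hal hN q a S k hk.
set c := p.[f].
have [V hV] : exists V, p - c%:P = V * ('X - f%:P).
  by apply/factor_theorem; rewrite /root hornerD hornerN hornerC subrr.
set Y := 'X - f%:P in hV.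
have hp' : p^`() = V^`() * Y + V.
  have -> : p = V * Y + c%:P by rewrite -hV subrK.
  by rewrite derivD derivC addr0 derivM /Y derivB derivX derivC subr0 mulr1.
have hW : W q 2 by apply: Wq.
have hWN : W (q ^+ N.+1) (2 * N.+1) by apply: Wexp.
have hPS : p * S = a ^+ N.+1 - q ^+ N.+1.
  by rewrite subrXX (_ : a - q = p) // /a /q; ring.
set U := a ^+ N.+1 - q ^+ N.+1 in hPS.
have ha : forall j, (a ^+ N.+1)`_j = (al ^+ N.+1)%:P * (j == N.+1)%:R.
  move=> j; rewrite /a exprMn -!rmorphXn /= coefCM coefXn.
  by [].
have hVX : V * (Y * S) = U - c%:P * S.
  by rewrite mulrA -hV mulrBl hPS.
have hT : Y * (V * S) = U - c%:P * S.
  by rewrite mulrCA hVX.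
have hN0 : (0 < N)%N by lia.
have hXs : forall j, (j <= N.-1)%N -> small ((Y * S)`_j).
  apply: (@inv_lemma V).
    have : (p - c%:P)`_1 = (V * Y)`_1 by rewrite hV.
    rewrite /Y mulrBr !coefB (coefMX V 1) (coefMC f V 1) coefC /=. 
    rewrite subr0 => /(congr1 (fun x : {poly F} => x`_0)).
    rewrite coefB coefM big_ord1 /= hf0 mulr0 subr0 hp1 => <-.
    exact: hal.
  move=> j hj; rewrite hVX !coefB ha.
  have -> : (j == N.+1) = false by apply/negbTE; lia.
  rewrite mulr0 sub0r; apply: smallB; last by rewrite coefCM; apply: smallMr.
  apply: smallN => i hi; apply: hWN; lia.
have hA : small ((V^`() * (Y * S))`_N.-1).
  rewrite coefM; apply: small_sum => -[j hj] _; apply: smallMl; apply: hXs.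
  by rewrite leq_subr.
have hB : small ((V * S)`_N.-1 - f * (al ^+ N.+1)%:P).
  rewrite (recur (V * S) f n.+2 N.-1) prednK // hT.
  rewrite big_ord_recl big_ord_recl.
  set R := \sum_(i < n) _.
  have hR : small R.
    apply: small_sum => -[i hi] _ /=; apply: smallMl.
    rewrite !coefB ha.
    rewrite /bump !leq0n !add1n.
    have -> : ((N + i.+2)%N == N.+1) = false by apply/negbTE; lia.
    rewrite mulr0 sub0r; apply: smallB; last by rewrite coefCM; apply: smallMr.
    apply: smallN => i' hi'; apply: hWN; lia.
  have hE : small (f ^+ n.+2 * (V * S)`_(N.-1 + n.+2)).
    have hf1 : ordge f 1 by move=> i; rewrite ltnS leqn0 => /eqP ->.
    apply: smallMr; apply: small_ord => i hi.
    apply: (@ordge_exp f 1 n.+2 hf1); lia.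
  rewrite !coefB !ha.
  have -> : (N + 0 == N.+1) = false by apply/negbTE; lia.
  have -> : (N + (lift ord0 (@ord0 n.+1)) == N.+1) = true by rewrite lift0 /=; apply/eqP; lia.
  set s1 := (q ^+ N.+1)`_(N + 0).
  set s2 := (q ^+ N.+1)`_(N + lift ord0 (@ord0 n.+1)).
  have hs1 : small s1 by move=> i hi; apply: hWN; lia.
  have hs2 : small s2 by move=> i hi; rewrite /s2 lift0 /=; apply: hWN; lia.
  rewrite !coefCM.
  match goal with |- small ?X => have -> : X =
     (f ^+ 0 * (- s1 - c * S`_(N + 0)) + f * (- s2 - c * S`_(N + lift ord0 (@ord0 n.+1))) + R)
      + f ^+ n.+2 * (V * S)`_(N.-1 + n.+2) end.
    rewrite /= mulr0 mulr1 expr1 expr0; ring.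
  apply: smallD => //; apply: smallD => //; apply: smallD.
    by apply: smallMl; apply: smallB; [apply: smallN|apply: smallMr].
  by apply: smallMl; apply: smallB; [apply: smallN|apply: smallMr].
rewrite hp' mulrDl -mulrA coefD coefD hA // add0r.
have := hB k hk; rewrite coefB coefMC => /eqP; rewrite subr_eq0 => /eqP ->.
by rewrite mulrC.
Qed.


Lemma core1 (p : {poly {poly F}}) (f : {poly F}) (al : F) N :
  f`_0 = 0 -> small (p.[f]) -> p`_0`_0 = 0 -> p`_1`_0 = al -> al != 0 ->
  (3 * n + 2 <= N)%N ->
  forall k, (k <= n)%N ->
  \sum_(1 <= m < N.+1) (al ^+ m.+1)^-1 *
     ((p^`() * ((al%:P)%:P * 'X - p) ^+ m)`_m.-1)`_k = f`_k.
Proof.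
move=> hf0 hc hp0 hp1 hal hN k hk.
have := key hf0 hc hp0 hp1 hal hN hk.
rewrite mulr_sumr coef_sum coef_sum => hk'.
apply: (mulfI (expf_neq0 N.+1 hal)); rewrite -hk' mulr_sumr.
rewrite big_ord_recl.
have -> : (p^`() * (((al%:P)%:P * 'X) ^+ (N - @ord0 N) * ((al%:P)%:P * 'X - p) ^+ @ord0 N))`_N.-1`_k = 0.
  rewrite expr0 mulr1 subn0 exprMn -!rmorphXn /= mulrC -mulrA coefCM coefXnM.
  by rewrite ifT ?coef0 ?mulr0 ?coef0 //; lia.
rewrite add0r big_add1 /= big_mkord; apply: eq_bigr => -[m' hm'] _.
rewrite /bump leq0n add1n /=.
set m := m'.+1.
have hm1 : (1 <= m)%N by [].
have hm2 : (m <= N)%N by rewrite /m; lia.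
rewrite exprMn -!rmorphXn /=.
set C := ((al ^+ (N - m))%:P)%:P.
have -> : p^`() * (C * 'X^(N - m) * ((al%:P)%:P * 'X - p) ^+ m) =
   C * ('X^(N - m) * (p^`() * ((al%:P)%:P * 'X - p) ^+ m)) by ring.
rewrite coefCM coefXnM ifF; last by apply/negbTE; lia.
have -> : (N.-1 - (N - m))%N = m.-1 by lia.
rewrite coefCM mulrA; congr (_ * _).
have -> : N.+1 = ((N - m) + m.+1)%N by lia.
by rewrite exprD mulfK // expf_neq0.
Qed.

Lemma telesc (a : nat -> F) N : [pchar F] =i pred0 ->
  \sum_(1 <= m < N.+1) (a m - m%:R / (m.+1)%:R * a m.+1) =
  \sum_(1 <= m < N.+1) a m / m%:R - N%:R / (N.+1)%:R * a N.+1.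
Proof.
move=> h0; have hn : forall m, (m.+1%:R : F) != 0.
  by move=> m; move/pcharf0P: h0 => ->.
elim: N => [|N ih]; first by rewrite !big_geq // (_ : (0%:R : F) = 0) // !mul0r subr0.
rewrite big_nat_recr // [in RHS]big_nat_recr //= ih.
have := hn N; have := hn N.+1 => h1 h2.
field.
have h0' := (iffLR (pcharf0P F) h0). by rewrite (addrC 1) natr1 -natrD !h0'.
Qed.

End Core.

Section Core2.
Variable F : fieldType.
Variable n : nat.

Lemma core2 (p : {poly {poly F}}) (f : {poly F}) (al : F) N :
  [pchar F] =i pred0 ->
  f`_0 = 0 -> small n (p.[f]) -> p`_0`_0 = 0 -> p`_1`_0 = al -> al != 0 ->
  (3 * n + 2 <= N)%N ->
  forall k, (k <= n)%N ->
  \sum_(1 <= m < N.+1) (m%:R * al ^+ m)^-1 *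
     ((((al%:P)%:P * 'X - p) ^+ m)`_m.-1)`_k = f`_k.
Proof.
move=> h0 hf0 hc hp0 hp1 hal hN k hk.
rewrite -(core1 hf0 hc hp0 hp1 hal hN hk).
set q := (al%:P)%:P * 'X - p.
pose a m := (al ^+ m)^-1 * ((q ^+ m)`_m.-1)`_k.
have h0' := (iffLR (pcharf0P F) h0).
have hn : forall m, (m.+1%:R : F) != 0 by move=> m; rewrite h0'.
have hp' : p^`() = (al%:P)%:P - q^`().
  rewrite /q derivB derivM derivX derivC mul0r add0r mulr1 opprB.
  by rewrite addrC subrK.
have hterm : forall m, (0 < m)%N -> (al ^+ m.+1)^-1 * ((p^`() * q ^+ m)`_m.-1)`_k =
     a m - m%:R / (m.+1)%:R * a m.+1.
  move=> m hm.
  have hd : ((q ^+ m.+1)^`())`_m.-1 = (q^`() * q ^+ m)`_m.-1 *+ m.+1.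
    by rewrite deriv_exp /= coefMn.
  move: hd; rewrite coef_deriv prednK // => /(congr1 (fun x : {poly F} => x`_k)).
  rewrite !coefMn => hd.
  rewrite hp' mulrBl coefB coefCM coefB /a /=.
  rewrite coefCM.
  have hc' : ((q^`() * q ^+ m)`_m.-1)`_k = m%:R / (m.+1)%:R * ((q ^+ m.+1)`_m)`_k.
    move: hd; move: ((q ^+ m.+1)`_m`_k) ((q^`() * q ^+ m)`_m.-1`_k) => B2 C hd.
    have hd2 : B2 * m%:R = C * m.+1%:R by rewrite !mulr_natr.
    by rewrite -[LHS](mulfK (hn m)) -hd2; ring.
  rewrite hc'.
  move: ((q ^+ m)`_m.-1`_k) ((q ^+ m.+1)`_m`_k) => B1 B2.
  move: (m%:R / m.+1%:R) => c.
  rewrite exprS invfM.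
  by field; rewrite hal expf_neq0.
have -> : \sum_(1 <= m < N.+1) al ^- m.+1 * (p^`() * q ^+ m)`_m.-1`_k =
   \sum_(1 <= m < N.+1) (a m - m%:R / (m.+1)%:R * a m.+1).
  by apply: eq_big_nat => m /andP [hm _]; apply: hterm.
rewrite telesc //.
have -> : a N.+1 = 0.
  have hW : W (q ^+ N.+1) (2 * N.+1) by apply: Wexp; apply: Wq.
  by rewrite /a hW ?mulr0 //; lia.
rewrite mulr0 subr0; apply: eq_big_nat => m _.
by rewrite /a invfM; ring.
Qed.

End Core2.

Section Bridge.
Variable F : fieldType.
Variable B : nat.

Definition agr (P : ps2 F) (r : {poly {poly F}}) :=
  forall i j, (i < B)%N -> (j < B)%N -> r`_j`_i = P i j.
Definition agr1 (a : ps F) (x : {poly F}) :=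
  forall i, (i < B)%N -> x`_i = a i.

Lemma agr_mul P Q r s : agr P r -> agr Q s -> agr (ps2_mul P Q) (r * s).
Proof.
move=> hr hs i j hi hj; rewrite coefM coef_sum /ps2_mul.
under eq_bigr do rewrite coefM.
rewrite exchange_big /=; apply: eq_bigr => -[a ha] _; apply: eq_bigr => -[b hb] _ /=.
by rewrite hr ?hs //; lia.
Qed.

Lemma agr_one : agr (@ps2_one F) 1.
Proof.
move=> i j _ _; rewrite coef1 /ps2_one.
case: j => [|j] /=; last by rewrite coef0 andbF.
by rewrite coef1 andbT; case: i.
Qed.

Lemma agr_pow P r m : agr P r -> agr (ps2_pow P m) (r ^+ m).
Proof.
move=> h; elim: m => [|m ih]; first exact: agr_one.
by rewrite exprS; apply: agr_mul.
Qed.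

Lemma agr_sub P Q r s : agr P r -> agr Q s -> agr (ps2_sub P Q) (r - s).
Proof. by move=> hr hs i j hi hj; rewrite !coefB hr ?hs. Qed.

Lemma agr_cy (al : F) : agr (ps2_cy al) ((al%:P)%:P * 'X).
Proof.
move=> i j _ _; rewrite coefCM coefX /ps2_cy.
case: j => [|[|j]] /=; rewrite ?mulr0 ?mulr1 ?coef0 ?coefC ?andbF //.
by case: i.
Qed.

Lemma agr_dy P p : agr P p -> (B > 0)%N ->
   (forall i j, (i < B)%N -> (j < B.-1)%N -> p^`()`_j`_i = ps2_dy P i j).
Proof.
move=> h hB i j hi hj; rewrite coef_deriv coefMn h //; lia.
Qed.

Lemma agr1_mul a b x y : agr1 a x -> agr1 b y -> agr1 (ps_mul a b) (x * y).
Proof.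
move=> hx hy i hi; rewrite coefM /ps_mul; apply: eq_bigr => -[c hc] _ /=.
by rewrite hx ?hy //; lia.
Qed.

Lemma agr1_pow a x m : agr1 a x -> agr1 (ps_pow a m) (x ^+ m).
Proof.
move=> h; elim: m => [|m ih].
  by move=> i _; rewrite expr0 coef1 /ps_one; case: i.
by rewrite exprS; apply: agr1_mul.
Qed.

End Bridge.

Lemma setup (F : fieldType) (P : ps2 F) (phi : ps F) (alpha : F) n N :
  phi 0%N = 0 ->
  (forall n, ps2_subst P phi n = 0) ->
  P 0%N 1%N = alpha -> (3 * n + 2 <= N)%N ->
  let B := (N + n + 4)%N in
  let p := \poly_(j < B.+1) \poly_(i < B.+1) P i j in
  let f := \poly_(i < B) phi i in
  [/\ f`_0 = 0, small n (p.[f]), p`_0`_0 = 0, p`_1`_0 = alpha &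
      (agr B.-1 (ps2_dy P) (p^`()) /\ agr B.-1 P p)].
Proof.
move=> h0 hsub hal hN B p f.
have eB : B = (N + n + 4)%N by [].
have hp : agr B P p.
  move=> i j hi hj; rewrite coef_poly ifT; last lia.
  by rewrite coef_poly ifT //; lia.
have hf : agr1 B phi f by move=> i hi; rewrite coef_poly hi.
have hP00 : P 0%N 0%N = 0.
  by move: (hsub 0%N); rewrite /ps2_subst big_ord1 /ps_mul big_ord1 /= /ps_one /= mulr1.
split.
- by rewrite coef_poly h0; case: ifP.
- move=> i hi; rewrite (horner_coef_wide _ (size_poly _ _)) coef_sum -[RHS](hsub i) /ps2_subst.
  rewrite (big_ord_widen B.+1 (fun j => ps_mul (ps2_coefy j P) (ps_pow phi j) i)); last by lia.
  rewrite [RHS]big_mkcond; apply: eq_bigr => -[j hj] _ /=.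
  case: ifP => hji.
    apply: (agr1_mul (B := B)); last by lia.
      by move=> i' hi'; rewrite /ps2_coefy coef_poly hj coef_poly ifT //; lia.
    exact: agr1_pow.
  have hf1 : ordge f 1 by move=> i'; rewrite ltnS leqn0 => /eqP ->; rewrite coef_poly h0; case: ifP.
  have := @ordgeM F (p`_j) (f ^+ j) 0 (1 * j) (fun i' (h : (i' < 0)%N) => False_ind _ (notF h)) (@ordge_exp F f 1 j hf1).
  by rewrite add0n mul1n; apply; lia.
- rewrite hp ?hP00 //; lia.
- rewrite hp ?hal //; lia.
- split; first by move=> i j hi hj; apply: (agr_dy hp) => //; lia.
  by move=> i j hi hj; apply: hp; lia.
Qed.

Theorem corollary3p2 (F : fieldType) (P : ps2 F) (phi : ps F) (alpha : F) :
  phi 0%N = 0 ->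
  (forall n, ps2_subst P phi n = 0) ->
  ps2_dy P 0%N 0%N = alpha ->
  alpha != 0 ->
  tadic_sum_from1
    (fun m => ps_scale (alpha ^+ m.+1)^-1
       (ps2_coefy m.-1
          (ps2_mul (ps2_dy P) (ps2_pow (ps2_sub (ps2_cy alpha) P) m))))
    phi
  /\
  ([pchar F] =i pred0 ->
   tadic_sum_from1
     (fun m => ps_scale (m%:R * alpha ^+ m)^-1
        (ps2_coefy m.-1 (ps2_pow (ps2_sub (ps2_cy alpha) P) m)))
     phi).
Proof.
move=> h0 hsub hdy hal.
have hP01 : P 0%N 1%N = alpha by rewrite -hdy /ps2_dy mulr1n.
split; last move=> hch; move=> n; exists (3 * n + 2)%N => N hN k hk.
  have [hf0 hs hp0 hp1 [hdy' hP]] := setup h0 hsub hP01 hN.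
  have -> : phi k = (\poly_(i < N + n + 4) phi i)`_k by rewrite coef_poly ifT //; lia.
  rewrite -(core1 hf0 hs hp0 hp1 hal hN hk).
  apply: eq_big_nat => m /andP[hm1 hm2]; rewrite /ps_scale /ps2_coefy; congr (_ * _).
  symmetry; apply: (agr_mul hdy' (agr_pow m (agr_sub (agr_cy alpha) hP))); lia.
have [hf0 hs hp0 hp1 [hdy' hP]] := setup h0 hsub hP01 hN.
have -> : phi k = (\poly_(i < N + n + 4) phi i)`_k by rewrite coef_poly ifT //; lia.
rewrite -(core2 hch hf0 hs hp0 hp1 hal hN hk).
apply: eq_big_nat => m /andP[hm1 hm2]; rewrite /ps_scale /ps2_coefy; congr (_ * _).
symmetry; apply: (agr_pow m (agr_sub (agr_cy alpha) hP)); lia.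
Qed.
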